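(* Let $n\ge3$ and let $U$ be a finite set with $|U|\ge n^{4n}$ and a fixed enumeration $U=\{v_1,\dots,v_{|U|}\}$. Let $V_1,\dots,V_n$ be i.i.d. random subsets of $U$, each obtained by including every element of $U$ independently with probability $\delta=\frac{1}{4n^2}$. For $t\in[n]$ let $P_t=\bigcap_{i=1}^{t-1}V_i$ (with $P_1=U$) and $S_t=\bigcap_{i=t}^n(U\setminus V_i)$, and when $P_t\ne\emptyset$ let $J_t=v_{r_t}$ with $r_t=\min\{r: v_r\in P_t\}$. Then $$\Pr\big(\text{for all }t\in[n]:\ P_t\ne\emptyset\ \text{and}\ J_t\in S_t\big)\ge\frac12.$$ *)

(* Defs.v *)
From mathcomp Require Import all_boot all_order all_algebra.
Set Implicit Arguments. Unset Strict Implicit. Unset Printing Implicit Defensive.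
Import Order.TTheory GRing.Theory Num.Theory.
Local Open Scope ring_scope.

(* U = 'I_N with the enumeration v_r = r (0-based); the n random subsets
   V_1..V_n are indexed by 'I_n (0-based). A configuration is the tuple of subsets. *)
Definition config (n N : nat) := {ffun 'I_n -> {set 'I_N}}.

Definition weight (R : pzRingType) (d : R) (n N : nat) (V : config n N) : R :=
  \prod_(i < n) \prod_(u : 'I_N) (if u \in V i then d else 1 - d).

Definition Prob (R : pzRingType) (d : R) (n N : nat) (E : pred (config n N)) : R :=
  \sum_(V : config n N | E V) weight d V.

Definition Pset (n N : nat) (V : config n N) (t : 'I_n) : {set 'I_N} :=
  \bigcap_(i : 'I_n | (i < t)%N) V i.

Definition Sset (n N : nat) (V : config n N) (t : 'I_n) : {set 'I_N} :=
  \bigcap_(i : 'I_n | (t <= i)%N) ~: V i.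

Definition Jelt (n N : nat) (V : config n N) (t : 'I_n) : option 'I_N :=
  [pick j in Pset V t | [forall k in Pset V t, (j <= k)%N]].

Definition goodEvent (n N : nat) (V : config n N) : bool :=
  [forall t : 'I_n, (Pset V t != set0) &&
     (if Jelt V t is Some j then j \in Sset V t else false)].

(* Main.v *)
Require Import Defs.
From mathcomp Require Import all_boot all_order all_algebra.
From mathcomp Require Import ring lra zify.
Import Order.TTheory GRing.Theory Num.Theory.
Set Implicit Arguments. Unset Strict Implicit. Unset Printing Implicit Defensive.
Local Open Scope ring_scope.

Definition col (n N : nat) (V : config n N) (u : 'I_N) : {ffun 'I_n -> bool} :=
  [ffun i => u \in V i].
Definition colw (R : realFieldType) (d : R) (n : nat) (c : {ffun 'I_n -> bool}) : R :=
  \prod_i (if c i then d else 1 - d).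
Definition uncol (n N : nat) (g : {ffun 'I_N -> {ffun 'I_n -> bool}}) : config n N :=
  [ffun i => [set u | g u i]].
Definition tr (n N : nat) (V : config n N) : {ffun 'I_N -> {ffun 'I_n -> bool}} :=
  [ffun u => col V u].

Lemma weight_col (R : realFieldType) (d : R) n N (V : config n N) :
  weight d V = \prod_u colw d (col V u).
Proof.
rewrite /weight exchange_big; apply: eq_bigr => u _; apply: eq_bigr => i _.
by rewrite ffunE.
Qed.

Lemma col_uncol n N (g : {ffun 'I_N -> {ffun 'I_n -> bool}}) u :
  col (uncol g) u = g u.
Proof. by apply/ffunP => i; rewrite !ffunE inE. Qed.

Lemma uncol_tr n N (V : config n N) : uncol (tr V) = V.
Proof. by apply/ffunP => i; apply/setP => u; rewrite !ffunE inE !ffunE. Qed.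

Lemma tr_uncol n N (g : {ffun 'I_N -> {ffun 'I_n -> bool}}) : tr (uncol g) = g.
Proof. by apply/ffunP => u; rewrite ffunE col_uncol. Qed.

Lemma Prob_col (R : realFieldType) (d : R) n N (E : pred (config n N))
  (Q : 'I_N -> pred {ffun 'I_n -> bool}) :
  (forall V, E V = [forall u, Q u (col V u)]) ->
  Prob d E = \prod_u \sum_(c | Q u c) colw d c.
Proof.
move=> HE; rewrite /Prob (reindex (@uncol n N)) /=; last first.
  by apply: onW_bij; exists (@tr n N) => x; [rewrite tr_uncol | rewrite uncol_tr].
rewrite bigA_distr_big_dep; apply: eq_big => g.
  rewrite HE; apply/forallP/familyP => H u; move: (H u); by rewrite col_uncol.
by move=> _; rewrite weight_col; apply: eq_bigr => u _; rewrite col_uncol.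
Qed.

Lemma colsum (R : realFieldType) (d : R) n (Q : 'I_n -> pred bool) :
  \sum_(c : {ffun 'I_n -> bool} | [forall i, Q i (c i)]) colw d c
  = \prod_i \sum_(b | Q i b) (if b then d else 1 - d).
Proof.
rewrite bigA_distr_big_dep; apply: eq_bigl => c.
by apply/forallP/familyP.
Qed.


Lemma prod_if (R : realFieldType) (a b : R) n t : (t <= n)%N ->
  \prod_(i < n) (if (i < t)%N then a else b) = a ^+ t * b ^+ (n - t).
Proof.
move=> tn.
rewrite -(big_mkord xpredT (fun i : nat => if (i < t)%N then a else b)).
rewrite (@big_cat_nat _ _ _ t) //=.
rewrite (@eq_big_nat _ _ _ 0 t _ (fun=> a)); last by move=> i /andP[_ ->].
rewrite (@eq_big_nat _ _ _ t n _ (fun=> b)); last by move=> i /andP[]; rewrite leqNgt => /negbTE ->.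
by rewrite !prodr_const_nat subn0.
Qed.

Definition pre n (t : nat) (c : {ffun 'I_n -> bool}) := [forall i : 'I_n, (i < t)%N ==> c i].
Definition suf n (t : nat) (c : {ffun 'I_n -> bool}) := [forall i : 'I_n, (t <= i)%N ==> ~~ c i].

Lemma sum_all (R : realFieldType) (d : R) n :
  \sum_(c : {ffun 'I_n -> bool}) colw d c = 1.
Proof.
rewrite (eq_bigl (fun c : {ffun 'I_n -> bool} => [forall i, (fun _ _ => true) i (c i)])); last first.
  by move=> c; apply/esym/forallP.
rewrite (colsum d (fun _ _ => true)) big1 // => i _.
by rewrite big_mkcond big_bool /= addrC subrK.
Qed.

Lemma sum_pre (R : realFieldType) (d : R) n t : (t <= n)%N ->
  \sum_(c : {ffun 'I_n -> bool} | pre t c) colw d c = d ^+ t.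
Proof.
move=> tn.
rewrite (eq_bigl (fun c : {ffun 'I_n -> bool} => [forall i, (fun (i : 'I_n) b => (i < t)%N ==> b) i (c i)])) //.
rewrite (colsum d (fun (i : 'I_n) b => (i < t)%N ==> b)).
rewrite (eq_bigr (fun i : 'I_n => if (i < t)%N then d else 1)); last first.
  by move=> i _; rewrite big_mkcond big_bool /=; case: (i < t)%N => /=; [rewrite addr0 | rewrite addrC subrK].
by rewrite prod_if // expr1n mulr1.
Qed.

Lemma sum_presuf (R : realFieldType) (d : R) n t : (t <= n)%N ->
  \sum_(c : {ffun 'I_n -> bool} | pre t c && suf t c) colw d c = d ^+ t * (1 - d) ^+ (n - t).
Proof.
move=> tn.
rewrite (eq_bigl (fun c : {ffun 'I_n -> bool} =>
   [forall i, (fun (i : 'I_n) b => if (i < t)%N then b else ~~ b) i (c i)])); last first.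
  move=> c; apply/idP/idP.
    move=> /andP[/forallP H1 /forallP H2]; apply/forallP => i /=; case: ifP => it.
      by move: (H1 i); rewrite it.
    by move: (H2 i); rewrite leqNgt it.
  move=> /forallP H; apply/andP; split; apply/forallP => i; move: (H i) => /=.
    by case: (i < t)%N.
  by case: leqP.
rewrite (colsum d (fun (i : 'I_n) b => if (i < t)%N then b else ~~ b)).
rewrite (eq_bigr (fun i : 'I_n => if (i < t)%N then d else 1 - d)); last first.
  by move=> i _; rewrite big_mkcond big_bool /=; case: (i < t)%N => /=; rewrite ?addr0 ?add0r.
by rewrite prod_if.
Qed.

Lemma sum_npre (R : realFieldType) (d : R) n t : (t <= n)%N ->
  \sum_(c : {ffun 'I_n -> bool} | ~~ pre t c) colw d c = 1 - d ^+ t.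
Proof.
move=> tn; rewrite -(sum_all d n) [X in _ = X - _](bigID (fun c => pre t c)) /=.
by rewrite sum_pre // addrC addrK.
Qed.

Lemma sum_pre_nsuf (R : realFieldType) (d : R) n t : (t <= n)%N ->
  \sum_(c : {ffun 'I_n -> bool} | pre t c && ~~ suf t c) colw d c
    = d ^+ t - d ^+ t * (1 - d) ^+ (n - t).
Proof.
move=> tn; have := sum_pre d tn; rewrite (bigID (fun c => suf t c)) /= sum_presuf // => H.
by rewrite -{1}H addrC addrK.
Qed.


Lemma memP n N (V : config n N) (t : 'I_n) u : (u \in Pset V t) = pre t (col V u).
Proof.
apply/bigcapP/forallP => H i.
  by apply/implyP => it; rewrite ffunE; apply: H.
by move=> it; move: (H i); rewrite it ffunE.
Qed.

Lemma memS n N (V : config n N) (t : 'I_n) u : (u \in Sset V t) = suf t (col V u).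
Proof.
apply/bigcapP/forallP => H i.
  by apply/implyP => it; rewrite ffunE; move: (H i it); rewrite inE.
by move=> it; move: (H i); rewrite it ffunE inE.
Qed.

Definition Fail n N (tl : 'I_n) (o : option ('I_n * 'I_N)) (V : config n N) : bool :=
  match o with
  | None => Pset V tl == set0
  | Some (t, j) => [&& j \in Pset V t,
                      [forall k : 'I_N, (k < j)%N ==> (k \notin Pset V t)]
                    & j \notin Sset V t]
  end.

Lemma bad_cover n N (tl : 'I_n) (V : config n N) :
  (forall t : 'I_n, (t <= tl)%N) ->
  ~~ goodEvent V -> exists o, Fail tl o V.
Proof.
move=> htl; rewrite /goodEvent negb_forall => /existsP [t].
rewrite negb_and negbK.
have [P0|PN] := eqVneq (Pset V t) set0.
  move=> _; exists None => /=; apply/eqP/setP => u; rewrite inE.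
  apply/negbTE/negP => Hu.
  have : u \in Pset V t.
    apply/bigcapP => i it; move/bigcapP: Hu; apply.
    exact: leq_trans it (htl t).
  by rewrite P0 inE.
move=> /= HJ.
have [x Px] := set0Pn _ PN.
rewrite /Jelt in HJ.
case: pickP HJ => [j /andP [Pj /forallP Hj]|H0] HJ.
  exists (Some (t, j)); rewrite /= Pj HJ andbT.
  apply/forallP => k; apply/implyP => kj; apply/negP => Pk.
  by move: (Hj k); rewrite Pk /= leqNgt kj.
exfalso.
case: (arg_minnP (fun k : 'I_N => nat_of_ord k) Px) => m Pm Hm.
have Pm' : m \in Pset V t := Pm.
move: (H0 m) => /=; rewrite Pm' /= => /negbT/negP; apply.
by apply/forallP => k; apply/implyP => Pk; apply: Hm.
Qed.


Lemma prod_if3 (R : realFieldType) (A B : R) N (j : 'I_N) :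
  \prod_(u < N) (if (u < j)%N then A else if (u == j :> nat) then B else 1) = A ^+ j * B.
Proof.
rewrite -(big_mkord xpredT (fun u : nat => if (u < j)%N then A else if (u == j :> nat) then B else 1)).
rewrite (@big_cat_nat _ _ _ j) //=; last exact: ltnW.
rewrite (@big_cat_nat _ _ _ j.+1 j) //=.
rewrite big_nat1 ltnn eqxx.
rewrite (@eq_big_nat _ _ _ 0 j _ (fun=> A)); last by move=> i /andP[_ ->].
rewrite (@eq_big_nat _ _ _ j.+1 N _ (fun=> 1)); last first.
  move=> i /andP[ji _]; rewrite ltnNge (ltnW ji) /=.
  by rewrite gtn_eqF.
rewrite !prodr_const_nat expr1n mulr1; congr (_ ^+ _ * _); apply: subn0.
Qed.

Lemma Prob_None (R : realFieldType) (d : R) n N (tl : 'I_n) :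
  Prob d (@Fail n N tl None) = (1 - d ^+ tl) ^+ N.
Proof.
rewrite (@Prob_col _ _ _ _ _ (fun _ c => ~~ pre tl c)); last first.
  move=> V /=; apply/eqP/forallP => [H u|H].
    by rewrite -memP H inE.
  by apply/setP => u; rewrite inE memP; apply/negbTE.
rewrite (eq_bigr (fun=> 1 - d ^+ tl)); last by move=> u _; rewrite sum_npre // ltnW.
by rewrite prodr_const card_ord.
Qed.

Lemma Prob_Some (R : realFieldType) (d : R) n N (tl : 'I_n) (t : 'I_n) (j : 'I_N) :
  Prob d (Fail tl (Some (t, j))) =
  (1 - d ^+ t) ^+ j * (d ^+ t - d ^+ t * (1 - d) ^+ (n - t)).
Proof.
rewrite (@Prob_col _ _ _ _ _ (fun u c => if (u < j)%N then ~~ pre t c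
                                   else if u == j then pre t c && ~~ suf t c else true)); last first.
  move=> V /=; apply/idP/forallP => [/and3P[Pj /forallP Hk Sj] u|H].
    case: ifP => uj; first by move: (Hk u); rewrite uj -memP.
    case: eqP => [->|//]; by rewrite -memP -memS Pj.
  move: (H j); rewrite ltnn eqxx -memP -memS => /andP[-> ->]; rewrite andbT.
  apply/forallP => k; apply/implyP => kj; move: (H k); rewrite kj memP //.
rewrite -(prod_if3 _ _ j); apply: eq_bigr => u _.
case: ifP => uj; first by rewrite sum_npre // ltnW.
case: eqP => [->|uj2]; first by rewrite eqxx sum_pre_nsuf // ltnW.
have -> : (nat_of_ord u == j) = false by apply/negP => /eqP/val_inj.
by rewrite sum_all.
Qed.


Lemma union_bound (R : realFieldType) (T K : finType) (w : T -> R) (P F0 : pred T)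
  (F : K -> pred T) :
  (forall x, 0 <= w x) -> (forall x, P x -> F0 x \/ exists k, F k x) ->
  \sum_(x | P x) w x <= \sum_(x | F0 x) w x + \sum_k \sum_(x | F k x) w x.
Proof.
move=> w0 H.
have E1 : \sum_k \sum_(x | F k x) w x = \sum_x \sum_k (if F k x then w x else 0).
  under eq_bigr do rewrite big_mkcond /=.
  by rewrite exchange_big.
rewrite E1 big_mkcond [X in _ <= X + _]big_mkcond -big_split /=.
apply: ler_sum => x _.
have S0 : 0 <= \sum_k (if F k x then w x else 0).
  by apply: sumr_ge0 => k _; case: ifP.
have A0 : 0 <= (if F0 x then w x else 0) by case: ifP.
case Px: (P x); last by lra.
case: (H x Px) => [F0x | [k Fk]].
  rewrite F0x; lra.
rewrite (bigD1 k) //= Fk.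
have S1 : 0 <= \sum_(i | i != k) (if F i x then w x else 0).
  by apply: sumr_ge0 => i _; case: ifP.
lra.
Qed.


Lemma total_weight (R : realFieldType) (d : R) n N :
  \sum_(V : config n N) weight d V = 1.
Proof.
have := @Prob_col R d n N xpredT (fun _ _ => true).
rewrite /Prob => ->; last by move=> V; apply/esym/forallP.
by apply: big1 => u _; rewrite sum_all.
Qed.

Lemma weight_ge0 (R : realFieldType) (d : R) n N (V : config n N) :
  0 <= d -> d <= 1 -> 0 <= weight d V.
Proof.
move=> d0 d1; apply: prodr_ge0 => i _; apply: prodr_ge0 => u _.
by case: ifP => _; lra.
Qed.

Lemma geom (R : realFieldType) (x : R) N :
  \sum_(j < N) (1 - x) ^+ j * x = 1 - (1 - x) ^+ N.
Proof.
elim: N => [|N IH]; first by rewrite big_ord0 expr0 subrr.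
by rewrite big_ord_recr /= IH exprSr; ring.
Qed.

Lemma bern (R : realFieldType) (d : R) m : 0 <= d -> d <= 1 ->
  1 - (1 - d) ^+ m <= m%:R * d.
Proof.
move=> d0 d1; elim: m => [|m IH]; first by rewrite expr0 subrr mul0r.
rewrite exprSr -natr1.
have hm : 0 <= m%:R :> R by apply: ler0n.
have hp : 0 <= (1 - d) ^+ m by apply: exprn_ge0; lra.
nra.
Qed.

Lemma powbound (R : realFieldType) (x : R) N : 0 <= x -> x <= 1 ->
  (1 - x) ^+ N * (1 + N%:R * x) <= 1.
Proof.
move=> x0 x1; elim: N => [|N IH]; first by rewrite expr0 mul0r addr0 mul1r.
rewrite exprSr -natr1.
have hm : 0 <= N%:R :> R by apply: ler0n.
have hp : 0 <= (1 - x) ^+ N by apply: exprn_ge0; lra.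
have hq : 0 <= (1 - x) ^+ N * (x * x) * (N%:R + 1).
  by apply: mulr_ge0; [apply: mulr_ge0 => //; nra | lra].
nra.
Qed.


Lemma natbound n : (3 <= n)%N -> (3 * (4 * n ^ 2) ^ n.-1 <= n ^ (4 * n))%N.
Proof.
move=> n3.
have e4 : (n ^ 4 = n ^ 2 * n ^ 2)%N by rewrite -expnD.
have e2 : (n ^ 2 = n * n)%N by rewrite mulnn.
have h1 : (4 * n ^ 2 <= n ^ 4)%N by rewrite e4 e2; nia.
have h2 : ((4 * n ^ 2) ^ n.-1 <= n ^ (4 * n.-1))%N.
  rewrite expnM leq_exp2r //; lia.
have h3 : (n ^ (4 * n) = n ^ 4 * n ^ (4 * n.-1))%N.
  by rewrite -expnD; congr expn; lia.
rewrite h3 leq_mul //.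
rewrite e4 e2; nia.
Qed.


Lemma inner_bound (R : realFieldType) (d : R) n N (tl t : 'I_n) :
  0 <= d -> d <= 1 ->
  \sum_(j : 'I_N) Prob d (Fail tl (Some (t, j))) <= n%:R * d.
Proof.
move=> d0 d1.
under eq_bigr do rewrite Prob_Some.
set x := d ^+ t; set y := (1 - d) ^+ (n - t).
have x0 : 0 <= x by apply: exprn_ge0.
have x1 : x <= 1 by apply: exprn_ile1.
have y0 : 0 <= y by apply: exprn_ge0; lra.
have y1 : y <= 1 by apply: exprn_ile1; lra.
rewrite (eq_bigr (fun j : 'I_N => (1 - y) * ((1 - x) ^+ j * x))); last by move=> j _; ring.
rewrite -mulr_sumr geom.
have z0 : 0 <= (1 - x) ^+ N by apply: exprn_ge0; lra.
have hb := bern (n - t) d0 d1.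
have hnt : (n - t)%:R <= n%:R :> R by rewrite ler_nat leq_subr.
rewrite -/y in hb.
nra.
Qed.

Lemma main_gen (R : realFieldType) (d : R) n N (tl : 'I_n) :
  0 <= d -> d <= 1 -> (forall t : 'I_n, (t <= tl)%N) ->
  n%:R * (n%:R * d) <= 1 / 4 -> (1 - d ^+ tl) ^+ N <= 1 / 4 ->
  1 / 2 <= Prob d (@goodEvent n N).
Proof.
move=> d0 d1 htl hn hN.
have tot := total_weight d n N.
have hsplit : Prob d (@goodEvent n N) + Prob d (predC (@goodEvent n N)) = 1.
  by rewrite -tot (bigID (@goodEvent n N) xpredT).
have hbad : Prob d (predC (@goodEvent n N)) <=
    Prob d (@Fail n N tl None) + \sum_(p : 'I_n * 'I_N) Prob d (@Fail n N tl (Some p)).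
  rewrite /Prob; apply: (union_bound (F := fun p => @Fail n N tl (Some p))); first by move=> V; apply: weight_ge0.
  by move=> V /(bad_cover htl) [[p|] H]; [right; exists p | left].
have hS : \sum_(p : 'I_n * 'I_N) Prob d (@Fail n N tl (Some p)) <= n%:R * (n%:R * d).
  rewrite (eq_bigr (fun p : 'I_n * 'I_N => Prob d (@Fail n N tl (Some (p.1, p.2))))); last by case.
  rewrite -(pair_big xpredT xpredT (fun (t : 'I_n) (j : 'I_N) => Prob d (@Fail n N tl (Some (t, j))))) /=.
  apply: le_trans (_ : \sum_(t : 'I_n) n%:R * d <= _).
    by apply: ler_sum => t _; apply: inner_bound.
  by rewrite sumr_const card_ord -(mulr_natl (n%:R * d) n).
rewrite Prob_None in hbad.
lra.
Qed.


Unset Implicit Arguments.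

Theorem mainTheorem7 (R : realFieldType) (n N : nat) :
  (3 <= n)%N -> (n ^ (4 * n) <= N)%N ->
  1 / 2 <= Prob (1 / (4 * (n ^ 2)%:R) : R) (@goodEvent n N).
Proof.
move=> n3 nN.
have hM := natbound n3.
case: n n3 nN hM => [//|m] n3 nN hM.
set d : R := 1 / (4 * (m.+1 ^ 2)%:R).
have q0 : 0 < (m.+1 ^ 2)%:R :> R by rewrite ltr0n expn_gt0.
have dE : d = 1 / (4 * m.+1 ^ 2)%:R by rewrite /d natrM.
have d0 : 0 <= d by rewrite /d divr_ge0 //; lra.
have q1 : 1 <= (m.+1 ^ 2)%:R :> R by rewrite ler1n expn_gt0.
have d1 : d <= 1 by rewrite /d ler_pdivrMr; lra.
apply: (@main_gen R d m.+1 N ord_max d0 d1).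
- by move=> t; rewrite -ltnS.
- have -> : m.+1%:R * (m.+1%:R * d) = (m.+1 ^ 2)%:R * d :> R.
    by rewrite mulrA -natrM mulnn.
  rewrite /d [X in X <= _](_ : _ = 1 / 4) //; field; rewrite gt_eqF //; have := ler0n R m; lra.
set x := d ^+ m.
have x0 : 0 <= x by apply: exprn_ge0.
have x1 : x <= 1 by apply: exprn_ile1.
set M := ((4 * m.+1 ^ 2) ^ m)%N.
have M0 : 0 < M%:R :> R by rewrite ltr0n expn_gt0 muln_gt0 expn_gt0.
have xE : x = 1 / M%:R by rewrite /x dE expr_div_n expr1n natrX.
have NM : 3 * M%:R <= N%:R :> R.
  by rewrite -natrM ler_nat (leq_trans hM).
have Nx : 3 <= N%:R * x.
  have xM : x * M%:R = 1 by rewrite xE mul1r mulVf // gt_eqF.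
  nra.
have := powbound N x0 x1.
have : 0 <= (1 - x) ^+ N by apply: exprn_ge0; lra.
nra.
Qed.
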